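(* For every $\mathcal{L}_{\mathrm{Int}}$-formula $A$: $A$ is a theorem of intuitionistic propositional logic $\mathsf{Int}$ if and only if $Tr(A)$ is a theorem of Visser's basic propositional logic $\mathsf{BPL}$.
   Context: $\mathcal{L}_{\mathrm{Int}}$-formulae are built from propositional letters and $\bot$ by $\wedge,\vee,\rightarrow$. $\mathsf{BPL}$ (language: letters, $\bot,\top,\wedge,\vee,\rightarrow$) is the set of formulae true at every point of every Kripke model $(W,R,V)$ with $R$ transitive and $V$ persistent ($w\in V(p)$ and $wRv$ imply $v\in V(p)$), where $\wedge,\vee,\top,\bot$ are evaluated pointwise and $w\models A\rightarrow B$ iff for every $v$ with $wRv$, $v\models A$ implies $v\models B$. Weight: $w(p)=w(\bot)=2$, $w(A\wedge B)=w(A)(1+w(B))$, $w(A\vee B)=1+w(A)+w(B)$, $w(A\rightarrow B)=1+w(A)w(B)$. For $n\ge1$: $\top^1\rightarrow B:=\top\rightarrow B$, $\top^{n+1}\rightarrow B:=\top\rightarrow(\top^n\rightarrow B)$. Positive/negative translations: for $q$ a letter or $\bot$, $q^{+n}=\top^n\rightarrow q$, $q^{-n}=q$; for $\circ\in\{\wedge,\vee\}$, $(A\circ B)^{+n}=\top^n\rightarrow(A^{+n}\circ B^{+n})$, $(A\circ B)^{-n}=A^{-n}\circ B^{-n}$; $(A\rightarrow B)^{+n}=\top^n\rightarrow(A^{-n}\rightarrow B^{+n})$, $(A\rightarrow B)^{-n}=A^{+n}\rightarrow B^{-n}$. The translation is $Tr(A):=A^{+w(A)}$. *)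

(* Defs.v *)
From Stdlib Require Import Arith.

Inductive IForm : Type :=
| IVar : nat -> IForm
| IBot : IForm
| IAnd : IForm -> IForm -> IForm
| IOr  : IForm -> IForm -> IForm
| IImp : IForm -> IForm -> IForm.

Inductive BForm : Type :=
| BVar : nat -> BForm
| BBot : BForm
| BTop : BForm
| BAnd : BForm -> BForm -> BForm
| BOr  : BForm -> BForm -> BForm
| BImp : BForm -> BForm -> BForm.

Fixpoint emb (A : IForm) : BForm :=
  match A with
  | IVar p => BVar p
  | IBot => BBot
  | IAnd A B => BAnd (emb A) (emb B)
  | IOr A B => BOr (emb A) (emb B)
  | IImp A B => BImp (emb A) (emb B)
  end.

Fixpoint weight (A : IForm) : nat :=
  match A with
  | IVar _ => 2
  | IBot => 2
  | IAnd A B => weight A * (1 + weight B)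
  | IOr A B => 1 + weight A + weight B
  | IImp A B => 1 + weight A * weight B
  end.

(* top_imp n B = T -> (T -> ... (T -> B)) with n copies of T.
   For n >= 1 this is exactly T^n -> B of the paper (top_imp 0 B = B is
   never used by the translation since weights are >= 2). *)
Fixpoint top_imp (n : nat) (B : BForm) : BForm :=
  match n with
  | 0 => B
  | S k => BImp BTop (top_imp k B)
  end.

(* Positive (pos = true) and negative (pos = false) translations A^{+n}, A^{-n}. *)
Fixpoint trans (pos : bool) (n : nat) (A : IForm) : BForm :=
  match A with
  | IVar p => if pos then top_imp n (BVar p) else BVar p
  | IBot => if pos then top_imp n BBot else BBot
  | IAnd A B =>
      if pos then top_imp n (BAnd (trans true n A) (trans true n B))
      else BAnd (trans false n A) (trans false n B)
  | IOr A B =>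
      if pos then top_imp n (BOr (trans true n A) (trans true n B))
      else BOr (trans false n A) (trans false n B)
  | IImp A B =>
      if pos then top_imp n (BImp (trans false n A) (trans true n B))
      else BImp (trans true n A) (trans false n B)
  end.

Definition Tr (A : IForm) : BForm := trans true (weight A) A.

Fixpoint forces {W : Type} (R : W -> W -> Prop) (V : nat -> W -> Prop)
  (w : W) (A : BForm) : Prop :=
  match A with
  | BVar p => V p w
  | BBot => False
  | BTop => True
  | BAnd A B => forces R V w A /\ forces R V w B
  | BOr A B => forces R V w A \/ forces R V w B
  | BImp A B => forall v, R w v -> forces R V v A -> forces R V v B
  end.

Definition persistent {W : Type} (R : W -> W -> Prop) (V : nat -> W -> Prop) : Prop :=
  forall p w v, V p w -> R w v -> V p v.

Definition transitive_rel {W : Type} (R : W -> W -> Prop) : Prop :=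
  forall x y z, R x y -> R y z -> R x z.

Definition reflexive_rel {W : Type} (R : W -> W -> Prop) : Prop :=
  forall x, R x x.

Definition BPL_thm (A : BForm) : Prop :=
  forall (W : Type) (R : W -> W -> Prop) (V : nat -> W -> Prop),
    transitive_rel R -> persistent R V -> forall w, forces R V w A.

Definition Int_thm (A : IForm) : Prop :=
  forall (W : Type) (R : W -> W -> Prop) (V : nat -> W -> Prop),
    reflexive_rel R -> transitive_rel R -> persistent R V ->
    forall w, forces R V w (emb A).

(* Main.v *)
Require Import Defs.
From Stdlib Require Import Arith Lia List Classical ClassicalDescription.
Import ListNotations.

Section Gen.
Variables (W : Type) (R : W -> W -> Prop) (V : nat -> W -> Prop).
Hypothesis Htr : transitive_rel R.
Hypothesis Hp : persistent R V.

Lemma persist : forall A w v, forces R V w A -> R w v -> forces R V v A.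
Proof.
  induction A; simpl; intros w v H Hwv; firstorder.
Qed.

Lemma top_imp_intro : forall m G x, forces R V x G -> forces R V x (top_imp m G).
Proof.
  induction m; simpl; intros G x H; auto.
  intros v Hxv _. apply IHm. eapply persist; eauto.
Qed.

Lemma top_imp_refl : reflexive_rel R -> forall m G x,
  forces R V x (top_imp m G) <-> forces R V x G.
Proof.
  intros Hr; induction m; simpl; intros G x; [tauto|].
  split.
  - intros H. apply IHm. apply H; auto.
  - intros H v Hxv _. apply IHm. eapply persist; eauto.
Qed.

Lemma trans_refl : reflexive_rel R -> forall n C pos x,
  forces R V x (trans pos n C) <-> forces R V x (emb C).
Proof.
  intros Hr n; induction C; intros pos x; destruct pos; simpl;
    try rewrite top_imp_refl by auto; simpl; try tauto.
  - rewrite (IHC1 true), (IHC2 true); tauto.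
  - rewrite (IHC1 false), (IHC2 false); tauto.
  - rewrite (IHC1 true), (IHC2 true); tauto.
  - rewrite (IHC1 false), (IHC2 false); tauto.
  - split; intros H v Hv; [rewrite <- (IHC1 false), <- (IHC2 true)
                          | rewrite (IHC1 false), (IHC2 true)]; auto.
  - split; intros H v Hv; [rewrite <- (IHC1 true), <- (IHC2 false)
                          | rewrite (IHC1 true), (IHC2 false)]; auto.
Qed.

Fixpoint cnt (l : list BForm) (x : W) : nat :=
  match l with
  | [] => 0
  | G :: l' => (if excluded_middle_informative (forces R V x G) then 1 else 0) + cnt l' x
  end.

Lemma cnt_le : forall l x, cnt l x <= length l.
Proof.
  induction l; simpl; intros x; auto.
  destruct excluded_middle_informative; specialize (IHl x); lia.
Qed.

Lemma cnt_mono : forall l x y, R x y -> cnt l x <= cnt l y.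
Proof.
  induction l; simpl; intros x y H; auto.
  specialize (IHl x y H).
  destruct (excluded_middle_informative (forces R V x a));
  destruct (excluded_middle_informative (forces R V y a)); try lia.
  exfalso; eauto using persist.
Qed.

Lemma cnt_strict : forall l x y, R x y ->
  ~ (forall G, In G l -> forces R V y G -> forces R V x G) -> cnt l x < cnt l y.
Proof.
  induction l; simpl; intros x y H Hn.
  - exfalso; apply Hn; intros G [].
  - destruct (classic (forces R V y a -> forces R V x a)) as [Ha|Ha].
    + assert (cnt l x < cnt l y).
      { apply IHl; auto. intros Hc. apply Hn. intros G [<-|HG]; auto. }
      destruct (excluded_middle_informative (forces R V x a));
      destruct (excluded_middle_informative (forces R V y a)); try lia.
      exfalso; eauto using persist.
    + assert (forces R V y a /\ ~ forces R V x a) as [Hy Hx] by tauto.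
      pose proof (cnt_mono l x y H).
      destruct (excluded_middle_informative (forces R V x a));
      destruct (excluded_middle_informative (forces R V y a)); try lia; tauto.
Qed.

Variable n : nat.
Variable F : list BForm.
Hypothesis HFn : length F < n.

Definition stationary (s : W) : Prop :=
  exists s', R s s' /\ forall G, In G F -> forces R V s' G -> forces R V s G.

Lemma lemL : forall G m x,
  (forall s, stationary s -> (s = x \/ R x s) -> forces R V s G) ->
  length F < m + cnt F x -> forces R V x (top_imp m G).
Proof.
  intros G; induction m; simpl; intros x H Hc.
  - pose proof (cnt_le F x); lia.
  - intros y Hxy _.
    destruct (classic (forall G', In G' F -> forces R V y G' -> forces R V x G')) as [Hst|Hns].
    + apply top_imp_intro. eapply persist; [|exact Hxy].
      apply H; [exists y; auto | auto].
    + apply IHm.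
      * intros s Hs [<-|Hys]; apply H; auto. right; eapply Htr; eauto.
      * pose proof (cnt_strict F x y Hxy Hns); lia.
Qed.

Definition W' := {s : W | stationary s}.
Definition R' (a b : W') : Prop := proj1_sig a = proj1_sig b \/ R (proj1_sig a) (proj1_sig b).
Definition V' (p : nat) (a : W') : Prop := V p (proj1_sig a).

Lemma R'_refl : reflexive_rel R'.
Proof. intros a; left; auto. Qed.

Lemma R'_trans : transitive_rel R'.
Proof.
  intros a b c [H1|H1] [H2|H2]; unfold R'.
  - left; congruence.
  - right; rewrite H1; auto.
  - right; rewrite <- H2; auto.
  - right; eapply Htr; eauto.
Qed.

Lemma V'_pers : persistent R' V'.
Proof.
  intros p a b H [E|E]; unfold V' in *; [rewrite <- E; auto | eapply Hp; eauto].
Qed.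

Lemma persistN : forall A a b, forces R' V' a A -> R' a b -> forces R' V' b A.
Proof.
  induction A; simpl; intros a b H Hab; try solve [firstorder].
  - eapply V'_pers; eauto.
  - intros c Hbc Hc; apply H; [eapply R'_trans; eauto | auto].
Qed.

Definition body (C : IForm) : BForm :=
  match C with
  | IVar p => BVar p
  | IBot => BBot
  | IAnd A B => BAnd (trans true n A) (trans true n B)
  | IOr A B => BOr (trans true n A) (trans true n B)
  | IImp A B => BImp (trans false n A) (trans true n B)
  end.

Lemma trans_body : forall C, trans true n C = top_imp n (body C).
Proof. destruct C; reflexivity. Qed.

Fixpoint conslist (C : IForm) : list BForm :=
  match C with
  | IAnd A B | IOr A B => conslist A ++ conslist B
  | IImp A B => trans false n B :: conslist A ++ conslist B
  | _ => []
  end.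

Lemma helper : forall C,
  (forall s : W', forces R' V' s (emb C) -> forces R V (proj1_sig s) (body C)) ->
  forall x, (forall s : W', (proj1_sig s = x \/ R x (proj1_sig s)) -> forces R' V' s (emb C)) ->
  forces R V x (trans true n C).
Proof.
  intros C HP x H. rewrite trans_body. apply lemL; [|lia].
  intros s Hs Hsx. apply (HP (exist _ s Hs)). apply H. simpl. exact Hsx.
Qed.

Lemma incl_l : forall (l1 l2 : list BForm), incl (l1 ++ l2) F -> incl l1 F.
Proof. intros l1 l2 H x Hx; apply H; apply in_or_app; auto. Qed.
Lemma incl_r : forall (l1 l2 : list BForm), incl (l1 ++ l2) F -> incl l2 F.
Proof. intros l1 l2 H x Hx; apply H; apply in_or_app; auto. Qed.

Lemma tR' : forall (s t : W'), (proj1_sig t = proj1_sig s \/ R (proj1_sig s) (proj1_sig t)) -> R' s t.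
Proof. intros s t [H|H]; [left; auto | right; auto]. Qed.

Lemma claim : forall C, incl (conslist C) F ->
  (forall s : W', forces R' V' s (emb C) -> forces R V (proj1_sig s) (body C)) /\
  (forall s : W', forces R V (proj1_sig s) (trans false n C) -> forces R' V' s (emb C)).
Proof.
  induction C; simpl; intros Hi.
  - split; auto.
  - split; auto.
  - destruct (IHC1 (incl_l _ _ Hi)) as [P1 N1]; destruct (IHC2 (incl_r _ _ Hi)) as [P2 N2].
    split.
    + intros s [Ha Hb]; split; apply helper; auto; intros t Ht;
        eapply persistN; eauto; apply tR'; auto.
    + intros s [Ha Hb]; split; auto.
  - destruct (IHC1 (incl_l _ _ Hi)) as [P1 N1]; destruct (IHC2 (incl_r _ _ Hi)) as [P2 N2].
    split.
    + intros s [Ha|Hb]; [left|right]; apply helper; auto; intros t Ht;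
        eapply persistN; eauto; apply tR'; auto.
    + intros s [Ha|Hb]; [left|right]; auto.
  - assert (Hi' : incl (conslist C1 ++ conslist C2) F)
      by (intros x Hx; apply Hi; right; auto).
    destruct (IHC1 (incl_l _ _ Hi')) as [P1 N1]; destruct (IHC2 (incl_r _ _ Hi')) as [P2 N2].
    split.
    + intros s H z Hsz Hza. apply helper; auto. intros t Ht. apply H.
      * right. destruct Ht as [<-|Ht]; [auto | eapply Htr; eauto].
      * apply N1. destruct Ht as [<-|Ht]; [auto | eapply persist; eauto].
    + intros s H t Hst Hta. apply N2.
      assert (Hta' : forces R V (proj1_sig t) (trans true n C1)).
      { apply helper; auto. intros u Hu. eapply persistN; eauto. apply tR'; auto. }
      destruct Hst as [Heq|Hst].
      * destruct s as [x [s' [Hxs' Htrf]]]. simpl in *. subst x.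
        apply Htrf; [apply Hi; left; auto|].
        apply H; auto. eapply persist; eauto.
      * apply H; auto.
Qed.

End Gen.

Lemma conslist_len : forall n A, length (conslist n A) + 2 <= weight A.
Proof.
  intros n; induction A; simpl; rewrite ?length_app; try lia.
  - assert (weight A1 * (1 + weight A2) = weight A1 + weight A1 * weight A2) by ring.
    assert (weight A2 <= weight A1 * weight A2) by (apply Nat.le_mul_l; lia). lia.
  - assert (2 * weight A2 <= weight A1 * weight A2) by (apply Nat.mul_le_mono_r; lia).
    assert (2 * weight A1 <= weight A1 * weight A2)
      by (rewrite (Nat.mul_comm (weight A1)); apply Nat.mul_le_mono_r; lia). lia.
Qed.

Theorem theorem5p8 : forall A : IForm, Int_thm A <-> BPL_thm (Tr A).
Proof.
  intros A; split.
  - intros HI W R V Htr Hp w. unfold Tr.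
    assert (HFn : length (conslist (weight A) A) < weight A)
      by (pose proof (conslist_len (weight A) A); lia).
    destruct (claim W R V Htr Hp _ _ HFn A (incl_refl _)) as [P _].
    apply (helper W R V Htr Hp _ _ HFn A P). intros s _.
    apply HI.
    + apply R'_refl.
    + apply R'_trans; auto.
    + apply V'_pers; auto.
  - intros HB W R V Hr Htr Hp w.
    pose proof (HB W R V Htr Hp w) as H. unfold Tr in H.
    rewrite (trans_refl W R V Htr Hp Hr) in H. exact H.
Qed.
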